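(* Let $A$ be a finite set with $|A|=n$. Consider the set of all bijections $f:A\to A$ for which there exists a binary operation $*$ on $A$ such that $(A,* )$ is a cyclic group and $f$ is an automorphism of $(A,* )$. Then these bijections realise at most $\phi(n)$ distinct cycle structures.
   Context: $\phi$ is Euler's totient function. The cycle structure of a bijection $f$ of a finite set is the description of how many cycles of each length $f$ has (a cycle being a sequence $a_1,\dots,a_m$ of distinct elements with $f(a_j)=a_{j+1}$ for $j<m$ and $f(a_m)=a_1$, of length $m$; fixed points are cycles of length $1$). *)

(* Defs.v *)
From mathcomp Require Import all_boot all_fingroup.
Set Implicit Arguments. Unset Strict Implicit. Unset Printing Implicit Defensive.

Definition is_cyclic_group (A : Type) (op : A -> A -> A) : Prop :=
  exists (e g : A),
    associative op /\ left_id e op /\ right_id e op /\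
    (forall x, exists y, op y x = e /\ op x y = e) /\
    (forall x, exists k : nat, x = iter k (op g) e).

(* f is an automorphism of (A, op) (bijectivity is built into {perm A}). *)
Definition is_automorphism (A : Type) (op : A -> A -> A) (f : A -> A) : Prop :=
  forall x y, f (op x y) = op (f x) (f y).

Definition cyclic_aut (A : finType) (f : {perm A}) : Prop :=
  exists op : A -> A -> A, is_cyclic_group op /\ is_automorphism op f.

Definition cycle_count (A : finType) (s : {perm A}) (k : nat) : nat :=
  #|[set X in porbits s | #|X| == k]|.

(* Cycle structure: the number of cycles of each length 1..|A|
   (cycles are never longer than |A|). *)
Definition cycle_structure (A : finType) (s : {perm A}) : seq nat :=
  [seq cycle_count s k | k <- iota 1 #|A|].

(* Main.v *)
Require Import Defs.
From mathcomp Require Import all_boot all_fingroup.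

Lemma cc_card (T : finType) (s : {perm T}) k :
  #|[set x | #|porbit s x| == k]| = cycle_count s k * k.
Proof.
rewrite /cycle_count; apply: card_uniform_partition.
  by move=> X; rewrite inE => /andP[_ /eqP].
apply/and3P; split.
- apply/eqP/setP => x; rewrite inE; apply/bigcupP/idP.
    case=> X; rewrite inE => /andP[/imsetP[y _ ->] /eqP hk] hx.
    by rewrite -eq_porbit_mem in hx; rewrite (eqP hx) hk.
  move=> hx; exists (porbit s x); last exact: porbit_id.
  by rewrite inE imset_f.
- apply/trivIsetP => X Y; rewrite !inE => /andP[/imsetP[x _ ->] _] /andP[/imsetP[y _ ->] _] neq.
  rewrite -setI_eq0; apply/eqP; apply/setP=> z; rewrite !inE; apply/negbTE/negP => /andP[zx zy].
  rewrite -eq_porbit_mem in zx; rewrite -eq_porbit_mem in zy.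
  by rewrite -(eqP zx) (eqP zy) eqxx in neq.
- rewrite inE; apply/negP => /andP[/imsetP[x _ hx] _]; have := porbit_id s x; by rewrite -hx inE.
Qed.

Lemma transfer (A B : finType) (f : {perm A}) (h : B -> B) (beta : B -> A) :
  injective beta -> (forall x, exists j, x = beta j) ->
  (forall j, f (beta j) = beta (h j)) ->
  forall k, #|[set x | #|porbit f x| == k]| = #|[set j | fingraph.order h j == k]|.
Proof.
move=> binj bsurj hf k.
have hit i j : iter i f (beta j) = beta (iter i h j).
  by elim: i => //= i ->; rewrite hf.
have po j : #|porbit f (beta j)| = fingraph.order h j.
  rewrite /fingraph.order -(card_imset _ binj); apply: eq_card => y.
  apply/porbitP/imsetP.
    case=> i ->; exists (iter i h j); last by rewrite permX hit.
    by rewrite inE fconnect_iter.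
  case=> z; rewrite inE => hz ->; exists (findex h j z).
  by rewrite permX hit iter_findex.
rewrite -(card_imset _ binj); apply: eq_card => x.
case: (bsurj x) => j ->; rewrite (mem_imset _ _ binj) !inE po //.
Qed.

Definition mulmod (n a : nat) (j : 'I_n.+1) : 'I_n.+1 :=
  Ordinal (ltn_pmod (j * a) (ltn0Sn n)).

Lemma cyc_main (A : finType) (op : A -> A -> A) (f : {perm A}) :
  is_cyclic_group op -> is_automorphism op f ->
  exists (n a : nat) (beta : 'I_n.+1 -> A),
    [/\ #|A| = n.+1, a < n.+1, coprime n.+1 a &
     [/\ injective beta,
        (forall x, exists j, x = beta j) &
        (forall j, f (beta j) = beta (mulmod n a j))]].
Proof.
case=> e [g [assoc [lid [rid [inv gen]]]]] aut.
pose p k := iter k (op g) e.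
have pD i j : p (i + j) = op (p i) (p j).
  elim: i => [|i IH]; first by rewrite add0n /= lid.
  by rewrite addSn /= -/(p (i + j)) IH assoc.
have canl x y z : op x y = op x z -> y = z.
  case: (inv x) => x' [hx' _] hyz.
  by rewrite -(lid y) -(lid z) -hx' -!assoc hyz.
have canr x y z : op y x = op z x -> y = z.
  case: (inv x) => x' [_ hx'] hyz.
  by rewrite -(rid y) -(rid z) -hx' !assoc hyz.
have ginj : injective (op g) by move=> x y; apply: canl.
pose sg := perm ginj.
have [d [dpos pd dmin]] : exists d, [/\ 0 < d, p d = e & forall m, 0 < m -> p m = e -> d <= m].
  have ex : exists m, (0 < m) && (p m == e).
    exists #[sg]%g; rewrite order_gt0 /=; apply/eqP.
    have := expg_order sg; move/(congr1 (fun s : {perm A} => s e)).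
    rewrite permX perm1 => <-; rewrite /p; apply: eq_iter => x; by rewrite permE.
  exists (ex_minn ex); case: ex_minnP => m /andP[m0 /eqP pm] mmin; split=> //.
  by move=> k k0 pk; apply: mmin; rewrite k0 pk eqxx.
have pM q : p (q * d) = e.
  by elim: q => [|q IH] //; rewrite mulSn pD pd IH lid.
have pmod k : p k = p (k %% d).
  by rewrite {1}(divn_eq k d) pD pM lid.
have pinj i j : i < d -> j < d -> p i = p j -> i = j.
  have key u v : u < v -> v < d -> p u = p v -> False.
    move=> uv vd puv.
    have : p (v - u) = e.
      apply: (canl (p u)); by rewrite -pD (subnKC (ltnW uv)) rid puv.
    move=> h; have := dmin _ _ h; rewrite subn_gt0 uv => /(_ isT).
    rewrite leqNgt => /negP; apply; apply: leq_ltn_trans vd; exact: leq_subr.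
  move=> hid jd pij; case: (ltngtP i j) => [h|h|//].
    by case: (key _ _ h jd pij).
  by case: (key _ _ h hid (esym pij)).
have fe : f e = e.
  apply: (canr (f e)); by rewrite -aut lid.
have fp k : f (p k) = iter k (op (f g)) e.
  elim: k => [|k IH] //=; by rewrite aut IH.
case: (gen (f g)) => a0 ha0.
have fpa k : f (p k) = p (a0 * k).
  rewrite fp; elim: k => [|k IH]; first by rewrite muln0.
  by rewrite /= IH mulnS pD ha0.
case: d dpos pd dmin pM pmod pinj => // d' _ pd dmin pM pmod pinj.
pose beta := fun j : 'I_d'.+1 => p j.
have binj : injective beta.
  by move=> i j /(pinj _ _ (ltn_ord i) (ltn_ord j)) => h; apply: val_inj.
have bsurj : forall x, exists j, x = beta j.
  move=> x; case: (gen x) => k ->; exists (Ordinal (ltn_pmod k (ltn0Sn d'))); exact: pmod.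
exists d', (a0 %% d'.+1), beta.
split.
- apply/eqP; rewrite eqn_leq; apply/andP; split.
    rewrite -[X in _ <= X](card_ord d'.+1) -(card_codom binj); apply: subset_leq_card.
    by apply/subsetP => x _; case: (bsurj x) => j ->; exact: codom_f.
  by rewrite -[X in X <= _](card_ord d'.+1); exact: leq_card binj.
- by rewrite ltn_mod.
- have [k hk] : exists k, f (p k) = p 1.
    case: (gen ((f^-1)%g (p 1))) => k hk; exists k.
    have -> : p k = (f^-1)%g (p 1) by exact: esym hk.
    by rewrite permKV.
  rewrite fpa pmod [p 1]pmod in hk.
  have := pinj _ _ (ltn_pmod _ (ltn0Sn d')) (ltn_pmod _ (ltn0Sn d')) hk => hm.
  have : coprime d'.+1 (a0 * k) by rewrite -coprime_modr hm coprime_modr coprimen1.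
  by rewrite coprime_modr coprimeMr => /andP[].
split=> //.
- move=> j; rewrite /beta fpa /= pmod [in RHS]pmod; congr (p _).
  by rewrite modn_mod modnMmr mulnC.
Qed.

Definition S (n a : nat) : seq nat :=
  [seq #|[set j : 'I_n.+1 | fingraph.order (mulmod n a) j == k]| %/ k | k <- iota 1 n.+1].

Theorem corollary2p2 (A : finType) :
  exists L : seq (seq nat),
    size L <= totient #|A| /\
    (forall f : {perm A}, cyclic_aut f -> cycle_structure f \in L).
Proof.
case hA: #|A| => [|n'].
  exists [::]; split => // f [op [[e _] _]].
  by rewrite (cardD1 e) inE in hA.
exists [seq S n' a | a <- iota 0 n'.+1 & coprime n'.+1 a]; split.
  rewrite size_map size_filter totient_count_coprime -sum1_count big_mkcond.
  by apply: leq_sum => i _; case: (coprime _ _).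
move=> f [op [hc ha]].
have [n [a [beta [hn alt cop [binj bsurj hom]]]]] := @cyc_main A op f hc ha.
move: hn; rewrite hA => -[hn]; subst n'.
have -> : cycle_structure f = S n a.
  rewrite /cycle_structure /S hA; apply/eq_in_map => k; rewrite mem_iota => /andP[k1 _].
  by rewrite -(@transfer A _ f _ beta binj bsurj hom) cc_card mulnK.
by apply: map_f; rewrite mem_filter cop mem_iota.
Qed.
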